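(* Let $n>1$ and let $G$ be a bipartite graph having two vertices $x$ and $y$ in the same partite set such that $N(x)$ is a proper subset of $N(y)$. Let $H=G+K_1$ and suppose $H[\overline{K_n}]$ admits a local distance antimagic labeling. Then $\chi_{ld}(H[\overline{K_{n}}])\geq 4$.
   Context: All graphs are finite, simple and undirected. $N(v)$ is the open neighborhood of $v$. For a graph $G=(V,E)$ of order $N$ without isolated vertices, a bijection $f\colon V\to\{1,2,\dots,N\}$ is a local distance antimagic labeling if $w(u)\neq w(v)$ for every edge $uv$, where $w(u)=\sum_{x\in N(u)}f(x)$. $\chi_{ld}(G)$ is the minimum number of distinct weights over all local distance antimagic labelings of $G$. $\overline{K_n}$ is the edgeless graph on $n$ vertices. $G+K_1$ is $G$ together with a new vertex adjacent to all vertices of $G$. The lexicographic product $G[H]$ has vertex set $V(G)\times V(H)$, with $(g,h)$ adjacent to $(g',h')$ iff $gg'\in E(G)$, or $g=g'$ and $hh'\in E(H)$. *)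

(* Defs.v *)
From mathcomp Require Import all_boot.
Set Implicit Arguments. Unset Strict Implicit. Unset Printing Implicit Defensive.

(* A finite simple graph on a finType T is a symmetric irreflexive relation e. *)

Definition nbhd (T : finType) (e : rel T) (v : T) : {set T} := [set x | e v x].

Definition bipartite_same_side (T : finType) (e : rel T) (x y : T) : Prop :=
  exists c : T -> bool, (forall u v, e u v -> c u != c v) /\ c x = c y.

(* G + K_1 : the new vertex is None, adjacent to every Some v. *)
Definition joinK1 (T : finType) (e : rel T) : rel (option T) :=
  fun a b => match a, b with
             | Some u, Some v => e u v
             | None, Some _ | Some _, None => true
             | None, None => false
             end.

(* The edgeless graph on U (used with U = 'I_n for \overline{K_n}). *)
Definition edgeless (U : finType) : rel U := fun _ _ => false.

Definition lexprod (T U : finType) (eG : rel T) (eH : rel U) : rel (T * U) :=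
  fun p q => eG p.1 q.1 || ((p.1 == q.1) && eH p.2 q.2).

(* A labeling: f : V -> 'I_#|V|, vertex v receives label (f v).+1 in {1..N};
   injectivity of f makes it a bijection V -> {1,...,N}. *)
Definition labeling (V : finType) := {ffun V -> 'I_#|V|}.

Definition weight (V : finType) (e : rel V) (f : labeling V) (u : V) : nat :=
  \sum_(x | e u x) (f x).+1.

Definition is_ldal (V : finType) (e : rel V) (f : labeling V) : bool :=
  injectiveb f &&
  [forall u, forall v, e u v ==> (weight e f u != weight e f v)].

Definition num_weights (V : finType) (e : rel V) (f : labeling V) : nat :=
  size (undup (codom (weight e f))).

(* The default #|V| is an upper bound on num_weights, so when at least one such
   labeling exists this is exactly the minimum. *)
Definition chi_ld (V : finType) (e : rel V) : nat :=
  \big[minn/#|V|]_(f : labeling V | is_ldal e f) num_weights e f.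

(* Main.v *)
Require Import Defs.
From mathcomp Require Import all_boot.

Lemma sum_strict (V : finType) (P Q : pred V) (F : V -> nat) q :
  (forall v, P v -> Q v) -> Q q -> ~~ P q -> (forall v, 0 < F v) ->
  \sum_(v | P v) F v < \sum_(v | Q v) F v.
Proof.
move=> PQ Qq Pq Fpos.
rewrite (bigID P Q) /=.
have ->: \sum_(v | Q v && P v) F v = \sum_(v | P v) F v.
  apply: eq_bigl => v; apply/andP/idP => [[]//|H]; split=> //; exact: PQ.
rewrite -[X in X < _]addn0 ltn_add2l.
rewrite (bigD1 q) /=; last by rewrite Qq Pq.
exact: leq_trans (Fpos q) (leq_addr _ _).
Qed.

Lemma four_distinct (V : finType) (g : V -> nat) a b c d :
  g a != g b -> g a != g c -> g a != g d -> g b != g c -> g b != g d ->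
  g c != g d -> 4 <= size (undup (codom g)).
Proof.
move=> Hab Hac Had Hbc Hbd Hcd.
have U : uniq [:: g a; g b; g c; g d].
  by rewrite /= !inE !negb_or Hab Hac Had Hbc Hbd Hcd.
have := uniq_leq_size U; apply => v; rewrite !inE mem_undup.
by case/or4P => /eqP ->; apply: codom_f.
Qed.

Theorem mainTheorem16 (T : finType) (e : rel T) (n : nat) (x y : T) :
  symmetric e -> irreflexive e ->
  1 < n ->
  bipartite_same_side e x y ->
  nbhd e x \proper nbhd e y ->
  (exists f : labeling (option T * 'I_n)%type,
      is_ldal (lexprod (joinK1 e) (@edgeless 'I_n)) f) ->
  4 <= chi_ld (lexprod (joinK1 e) (@edgeless 'I_n)).
Proof.
move=> esym eirr n1 _ /properP [/subsetP sub [z zy zx]] _.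
rewrite !inE in zy zx.
set E := lexprod (joinK1 e) (@edgeless 'I_n).
have HE : forall p q, E p q = joinK1 e p.1 q.1.
  by move=> p q; rewrite /E /lexprod /edgeless andbF orbF.
have n0 : 0 < n by apply: ltnW.
pose i0 : 'I_n := Ordinal n0.
rewrite /chi_ld; apply: (big_ind (fun m => 4 <= m)).
- have yz : y != z by apply/eqP => H; move: zy; rewrite H eirr.
  have T2 : 2 <= #|T|.
    by have := max_card [set y; z]; rewrite cards2 yz.
  rewrite card_prod card_option card_ord.
  by apply: (@leq_mul 2 2) => //; apply: leq_trans T2 _.
- by move=> a b Ha Hb; rewrite leq_min Ha Hb.
move=> f /andP [_ /forallP H].
have neq : forall u v, E u v -> weight E f u != weight E f v.
  by move=> u v Euv; move/forallP: (H u) => /(_ v); rewrite Euv.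
have strict : forall a b c, (forall d, joinK1 e a d -> joinK1 e b d) ->
    joinK1 e b c -> ~~ joinK1 e a c ->
    weight E f (a, i0) < weight E f (b, i0).
  move=> a b c Hab Hb Ha; rewrite /weight.
  apply: (@sum_strict _ _ _ _ (c, i0)) => //.
  - by move=> v; rewrite !HE; apply: Hab.
  - by rewrite HE.
  - by rewrite HE.
have A : weight E f (Some x, i0) < weight E f (Some y, i0).
  apply: (strict _ _ (Some z)) => //.
  case=> //= d Hd; have := sub d; rewrite !inE; exact.
have Nn : forall a, weight E f (Some a, i0) != weight E f (None, i0).
  by move=> a; apply: neq; rewrite HE.
have xy : weight E f (Some x, i0) != weight E f (Some y, i0).
  by rewrite neq_ltn A.
case: (pickP (e x)) => [u xu | nox].
  have yu : e y u by have := sub u; rewrite !inE; apply.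
  apply: (@four_distinct _ _ (Some x, i0) (Some y, i0) (Some u, i0) (None, i0)) => //.
  - by apply: neq; rewrite HE.
  - by apply: neq; rewrite HE.
have B : weight E f (Some x, i0) < weight E f (Some z, i0).
  apply: (strict _ _ (Some y)) => /=.
  - by case=> //= d; rewrite nox.
  - by rewrite esym.
  - by rewrite nox.
apply: (@four_distinct _ _ (Some x, i0) (Some y, i0) (Some z, i0) (None, i0)) => //.
- by rewrite neq_ltn B.
- by apply: neq; rewrite HE.
Qed.
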